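(* Let $\sigma>0$, $\theta\ge0$, $\gamma\ge0$, $x>0$, and for each $N\in\mathbb N$ let $Z^{N,x}$ be the Markov jump process on $\{k/N:k\in\mathbb N_0\}$ started at $\lfloor Nx\rfloor/N$ which, from state $k/N$, jumps to $(k+1)/N$ at rate $kN\sigma^2/2+k\theta$ and to $(k-1)/N$ at rate $kN\sigma^2/2+k(k-1)\gamma/N$. Then for every $T>0$, $$\sup_{N\ge1}\sup_{0\le t\le T}\mathbb E\big[(Z^{N,x}_t)^4\big]<\infty.$$ *)

(* Defs.v *)
From HB Require Import structures.
From mathcomp Require Import all_boot all_order all_algebra.
From mathcomp Require Import all_classical all_reals all_analysis.
Set Implicit Arguments. Unset Strict Implicit. Unset Printing Implicit Defensive.
Import Order.TTheory GRing.Theory Num.Theory.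
Local Open Scope classical_set_scope.
Local Open Scope ring_scope.

(* The chain Z^N lives on {k/N : k in N_0}; we index states by k : nat. *)
Section BirthDeath.
Variables (R : realType) (sigma theta gamma : R) (N : nat).

Definition up_rate (k : nat) : R :=
  k%:R * N%:R * sigma ^+ 2 / 2 + k%:R * theta.
Definition down_rate (k : nat) : R :=
  k%:R * N%:R * sigma ^+ 2 / 2 + k%:R * (k.-1)%:R * gamma / N%:R.
Definition exit_rate (k : nat) : R := up_rate k + down_rate k.

Local Open Scope ereal_scope.

(* p_n(t)(i,j) = probability of going from i to j in time t with exactly
   n jumps (backward first-jump decomposition). *)
Fixpoint pjumps (n : nat) (t : R) (i j : nat) {struct n} : \bar R :=
  match n with
  | O => if i == j then (expR (- (exit_rate i * t)))%:E else 0
  | n'.+1 =>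
      \int[lebesgue_measure]_(s in `[0%R, t]%classic)
        ((expR (- (exit_rate i * s)))%:E *
           ((up_rate i)%:E * pjumps n' (t - s) i.+1 j
            + (down_rate i)%:E * pjumps n' (t - s) i.-1 j))
  end.

(* Transition function of the (minimal) Markov jump process with these rates:
   P_t(i,j) = sum over the number n of jumps. *)
Definition trans_prob (t : R) (i j : nat) : \bar R :=
  \sum_(n <oo) pjumps n t i j.

Definition fourth_moment (k0 : nat) (t : R) : \bar R :=
  \sum_(j <oo) trans_prob t k0 j * ((j%:R / N%:R) ^+ 4)%:E.

End BirthDeath.

Definition start_index (R : realType) (N : nat) (x : R) : nat :=
  Num.truncn (N%:R * x).

(* Main.v *)
Require Import Defs.
From HB Require Import structures.
From mathcomp Require Import all_boot all_order all_algebra.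
From mathcomp Require Import all_classical all_reals all_analysis.
From mathcomp Require Import measurable_realfun.
From mathcomp Require Import ring lra.
Import Order.TTheory GRing.Theory Num.Theory.
Local Open Scope classical_set_scope.
Local Open Scope ring_scope.
Section lowint.
Local Open Scope ereal_scope.
Context d (T : measurableType d) (R : realType).
Variable mu : {measure set T -> \bar R}.
Import HBNNSimple.

Lemma lint_le (D : set T) (f g : T -> \bar R) :
  (forall x, D x -> 0 <= f x) -> (forall x, D x -> f x <= g x) ->
  \int[mu]_(x in D) f x <= \int[mu]_(x in D) g x.
Proof.
move=> f0 fg.
have g0 : forall x, D x -> 0 <= g x by move=> x Dx; exact: le_trans (f0 _ Dx) (fg _ Dx).
rewrite (ge0_integralE mu f0) (ge0_integralE mu g0).
apply: ereal_sup_le => _ [h hf <-]; exists h => // x.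
exact: le_trans (hf x) (lee_restrict fg x).
Qed.

Lemma lint_add (D : set T) (f g : T -> \bar R) :
  (forall x, D x -> 0 <= f x) -> (forall x, D x -> 0 <= g x) ->
  \int[mu]_(x in D) f x + \int[mu]_(x in D) g x <= \int[mu]_(x in D) (f x + g x).
Proof.
move=> f0 g0.
have fg0 : forall x, D x -> 0 <= f x + g x by move=> x Dx; rewrite adde_ge0 ?f0 ?g0.
have If0 := integral_ge0 mu f0.
have Ig0 := integral_ge0 mu g0.
have key : forall a b, [set sintegral mu h | h in [set h : {nnsfun T >-> R} |
     forall x, (h x)%:E <= (f \_ D) x]] a ->
  [set sintegral mu h | h in [set h : {nnsfun T >-> R} |
     forall x, (h x)%:E <= (g \_ D) x]] b ->
  a + b <= \int[mu]_(x in D) (f x + g x).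
  move=> _ _ [h1 h1f <-] [h2 h2g <-].
  rewrite (ge0_integralE mu fg0) -sintegralD.
  apply: ereal_sup_ubound; exists (add_nnsfun h1 h2) => // x /=.
  rewrite EFinD /patch; have := h1f x; have := h2g x; rewrite /patch.
  by case: ifP => _ a b; apply: le_trans (leeD b a) _; rewrite ?adde0.
set z := \int[mu]_(x in D) (f x + g x).
have [zoo|zfin] : z = +oo \/ z \is a fin_num.
  have : 0 <= z by exact: integral_ge0.
  by case: z => [r|_|//]; [right|left].
  by rewrite zoo leey.
have B0 : [set sintegral mu h | h in [set h : {nnsfun T >-> R} |
     forall x, (h x)%:E <= (g \_ D) x]] 0.
  by exists nnsfun0; [move=> x; exact: erestrict_ge0|exact: sintegral0].
have A0 : [set sintegral mu h | h in [set h : {nnsfun T >-> R} |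
     forall x, (h x)%:E <= (f \_ D) x]] 0.
  by exists nnsfun0; [move=> x; exact: erestrict_ge0|exact: sintegral0].
have Bfin : forall b, [set sintegral mu h | h in [set h : {nnsfun T >-> R} |
     forall x, (h x)%:E <= (g \_ D) x]] b -> b \is a fin_num.
  move=> b Bb.
  have b0 : 0 <= b by case: Bb => h _ <-; exact: sintegral_ge0.
  have bz : b <= z by rewrite -[b]add0e; exact: (key _ _ A0 Bb).
  by rewrite ge0_fin_numE// (le_lt_trans bz)// -ge0_fin_numE// (le_trans b0 bz).
have IfB : forall b, [set sintegral mu h | h in [set h : {nnsfun T >-> R} |
     forall x, (h x)%:E <= (g \_ D) x]] b -> \int[mu]_(x in D) f x + b <= z.
  move=> b Bb; rewrite -leeBrDr; last exact: Bfin.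
  rewrite (ge0_integralE mu f0); apply: ge_ereal_sup => a Aa.
  by rewrite leeBrDr; [exact: key|exact: Bfin].
have Iffin : \int[mu]_(x in D) f x \is a fin_num.
  have := IfB 0 B0; rewrite adde0 => Ifz.
  by rewrite ge0_fin_numE// (le_lt_trans Ifz)// -ge0_fin_numE// (le_trans If0 Ifz).
rewrite -leeBrDl//.
rewrite (ge0_integralE mu g0); apply: ge_ereal_sup => b Bb.
by rewrite leeBrDl//; exact: IfB.
Qed.

Lemma lint_scale (D : set T) (f : T -> \bar R) (k : R) : (0 <= k)%R ->
  (forall x, D x -> 0 <= f x) ->
  k%:E * \int[mu]_(x in D) f x <= \int[mu]_(x in D) (k%:E * f x).
Proof.
move=> k0 f0.
have kf0 : forall x, D x -> 0 <= k%:E * f x by move=> x Dx; rewrite mule_ge0 ?f0.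
rewrite (ge0_integralE mu f0) (ge0_integralE mu kf0) -ereal_supZl//; last first.
  apply/set0P; exists 0; exists nnsfun0; [move=> x; exact: erestrict_ge0|exact: sintegral0].
apply: ereal_sup_le => _ [_ [h hf <-] <-]; exists (scale_nnsfun h k0).
  move=> x /=; rewrite erestrict_scale EFinM; exact: lee_wpmul2l.
by rewrite /= sintegralrM.
Qed.

Lemma lint_sum (I : Type) (s : seq I) (D : set T) (f : I -> T -> \bar R) :
  (forall i x, D x -> 0 <= f i x) ->
  \sum_(i <- s) \int[mu]_(x in D) f i x <= \int[mu]_(x in D) (\sum_(i <- s) f i x).
Proof.
move=> f0; elim: s => [|i s IH].
  by rewrite big_nil; under eq_integral do rewrite big_nil; rewrite integral0.
rewrite big_cons; under [X in _ <= X]eq_integral do rewrite big_cons.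
apply: (@le_trans _ _ (\int[mu]_(x in D) f i x + \int[mu]_(x in D) \sum_(j <- s) f j x)).
  exact: leeD2l.
apply: lint_add => x Dx; first exact: f0.
by rewrite sume_ge0// => j _; exact: f0.
Qed.
End lowint.

Lemma int_exp (R : realType) (b t k : R) : 0 <= b -> 0 <= t -> 0 <= k ->
  (\int[lebesgue_measure]_(s in `[0%R, t]%classic) (k * (b * expR (- b * s)))%:E
   = (k * (1 - expR (- b * t)))%:E)%E.
Proof.
move=> b0 t0 k0.
have [->|tpos] := eqVneq t 0.
  by rewrite set_itv1 integral_set1 mulr0 expR0 subrr mulr0.
have {tpos} tpos : 0 < t by rewrite lt_neqAle eq_sym tpos t0.
transitivity (\int[lebesgue_measure]_(s in `[0%R, t]%classic) (k%:E * (exponential_pdf b s)%:E))%E.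
  apply: eq_integral => s; rewrite inE /= in_itv /= => /andP[s0 _].
  by rewrite exponential_pdfE.
rewrite ge0_integralZl_EFin//.
- have := exponential_prob_itv0c b tpos; rewrite /exponential_prob => ->.
  by rewrite /= -EFinM.
- by move=> x _; rewrite lee_fin exponential_pdf_ge0.
- have mE : measurable_fun [set: R] (EFin \o (exponential_pdf b : R -> R)).
    by apply/measurableT_comp => //; exact: measurable_exponential_pdf.
  exact: measurable_funTS mE.

Qed.

Lemma poly_bound (R : realType) (s2 th ga z d : R) :
  0 <= s2 -> 0 <= th -> 0 <= ga -> 0 < d -> d <= 1 -> d <= z ->
  s2 * z * (6 * z^+2 + d^+2) + th * z * (4 * z^+3 + 6 * z^+2 * d + 4 * z * d^+2 + d^+3)
  + ga * z * (z - d) * (- 4 * z^+3 + 6 * z^+2 * d - 4 * z * d^+2 + d^+3)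
  <= (15 * (th + s2 + ga)) * (1 + z^+4).
Proof.
move=> s0 t0 g0 d0 d1 dz.
have z0 : 0 <= z by lra.
have zz : z^+2 <= 1 + z^+4.
  have := sqr_ge0 (z^+2 - 1); nra.
have z1 : z <= 1 + z^+4.
  have := sqr_ge0 (z - 1); nra.
have z3 : z^+3 <= 1 + z^+4.
  have := sqr_ge0 (z - 1) => h1.
  have h2 : 0 <= z^+2 by nra.
  have h3 : 0 <= z^+2 * (z-1)^+2 by nra.
  nra.
have d1' : 0 <= 1 - d by lra.
have d2 : d^+2 <= 1.
  have := mulr_ge0 (ltW d0) d1'; nra.
have d2' : 0 <= 1 - d^+2 by lra.
have zd2 : z * d^+2 <= z.
  have := mulr_ge0 z0 d2'; nra.
have z2d : z^+2 * d <= z^+2.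
  have := mulr_ge0 (sqr_ge0 z) d1'; nra.
have d3 : d^+3 <= 1.
  have := mulr_ge0 (ltW d0) d2'; rewrite exprS; nra.
have zd : 0 <= z * (z - d) by apply: mulr_ge0 => //; lra.
have zdz : z * (z - d) <= z^+2.
  have := mulr_ge0 z0 (ltW d0); rewrite expr2; nra.
have A : s2 * z * (6 * z^+2 + d^+2) <= s2 * (7 * (1 + z^+4)).
  rewrite -mulrA; apply: ler_wpM2l => //. nra.
have B : th * z * (4 * z^+3 + 6 * z^+2 * d + 4 * z * d^+2 + d^+3) <= th * (15 * (1 + z^+4)).
  rewrite -mulrA; apply: ler_wpM2l => //. nra.
have C : ga * z * (z - d) * (- 4 * z^+3 + 6 * z^+2 * d - 4 * z * d^+2 + d^+3) <= ga * (7 * (1 + z^+4)).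
  rewrite -!mulrA; apply: ler_wpM2l => //.
  have : (- 4 * z^+3 + 6 * z^+2 * d - 4 * z * d^+2 + d^+3) <= 6 * z^+2 + 1 by nra.
  move=> H. rewrite mulrA. nra.
nra.
Qed.

Definition hh (R : realType) (N i : nat) : R := 1 + (i%:R / N%:R) ^+ 4.

Lemma lyap (R : realType) (sigma theta gamma : R) (N i : nat) :
  0 <= theta -> 0 <= gamma -> (1 <= N)%N ->
  up_rate sigma theta N i * hh R N i.+1 + down_rate sigma gamma N i * hh R N i.-1
  <= (exit_rate sigma theta gamma N i + 15 * (theta + sigma^+2 + gamma)) * hh R N i.
Proof.
move=> t0 g0 N1.
have M0 : 0 < N%:R :> R by rewrite ltr0n.
have M1 : 1 <= N%:R :> R by rewrite ler1n.
have hge0 : forall j, 0 <= hh R N j.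
  by move=> j; rewrite /hh addr_ge0 ?exprn_ge0 ?divr_ge0.
have c0 : 0 <= 15 * (theta + sigma^+2 + gamma) by rewrite mulr_ge0 ?addr_ge0 ?sqr_ge0.
case: i => [|n].
  rewrite /exit_rate /up_rate /down_rate mulr0n !mul0r !addr0 mul0r add0r.
by rewrite mul0r add0r mulr_ge0.
rewrite -subr_ge0.
set E := (X in 0 <= X).
have -> : E = (15 * (theta + sigma^+2 + gamma)) * (1 + (n.+1%:R / N%:R)^+4) -
  (sigma^+2 * (n.+1%:R / N%:R) * (6 * (n.+1%:R / N%:R)^+2 + (1/N%:R)^+2)
  + theta * (n.+1%:R / N%:R) * (4 * (n.+1%:R / N%:R)^+3 + 6 * (n.+1%:R / N%:R)^+2 * (1/N%:R)
     + 4 * (n.+1%:R / N%:R) * (1/N%:R)^+2 + (1/N%:R)^+3)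
  + gamma * (n.+1%:R / N%:R) * ((n.+1%:R / N%:R) - 1/N%:R) *
     (- 4 * (n.+1%:R / N%:R)^+3 + 6 * (n.+1%:R / N%:R)^+2 * (1/N%:R)
      - 4 * (n.+1%:R / N%:R) * (1/N%:R)^+2 + (1/N%:R)^+3)).
  rewrite /E /exit_rate /up_rate /down_rate /hh /= -!natr1.
  field; lra.
rewrite subr_ge0; apply: poly_bound => //.
- exact: sqr_ge0.
- by rewrite divr_gt0.
- by rewrite ler_pdivrMr // mul1r.
- by rewrite ler_pM2r ?invr_gt0 // -natr1 lerDr.
Qed.

Lemma hh_ge0 (R : realType) N i : 0 <= hh R N i.
Proof. by rewrite /hh addr_ge0 ?exprn_ge0 ?divr_ge0. Qed.

Lemma sum_delta (R : realType) (J i : nat) (X : nat -> \bar R) : (0 <= X i)%E ->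
  (\sum_(0 <= j < J) (if i == j then X j else 0) <= X i)%E.
Proof.
move=> X0; elim: J => [|J IH]; first by rewrite big_geq.
rewrite big_nat_recr //=; case: eqP => [<-|_]; last by rewrite adde0.
rewrite big1_seq ?add0e // => j; rewrite mem_iota => jJ.
by case: eqP => // ij; move: jJ; rewrite -ij subn0 ltnn andbF.
Qed.

Section main.
Variables (R : realType) (sigma theta gamma : R) (N : nat).
Hypotheses (ht : 0 <= theta) (hg : 0 <= gamma).

Lemma up_ge0 i : 0 <= up_rate sigma theta N i.
Proof. have s2 := sqr_ge0 sigma; rewrite /up_rate; apply: addr_ge0; last exact: mulr_ge0.
by apply: divr_ge0 => //; apply: mulr_ge0 => //; apply: mulr_ge0. Qed.
Lemma down_ge0 i : 0 <= down_rate sigma gamma N i.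
Proof. have s2 := sqr_ge0 sigma; rewrite /down_rate; apply: addr_ge0; apply: divr_ge0 => //; apply: mulr_ge0 => //; apply: mulr_ge0. Qed.
Lemma exit_ge0 i : 0 <= exit_rate sigma theta gamma N i.
Proof. by rewrite /exit_rate addr_ge0 ?up_ge0 ?down_ge0. Qed.

Lemma pj_ge0 n t i j : (0 <= pjumps sigma theta gamma N n t i j)%E.
Proof.
elim: n t i j => [|n IH] t i j /=.
  by case: eqP => _ //; rewrite lee_fin expR_ge0.
apply: integral_ge0 => s _; rewrite mule_ge0 ?lee_fin ?expR_ge0 //.
by rewrite adde_ge0 // mule_ge0 // lee_fin ?up_ge0 ?down_ge0.
Qed.


Local Notation F j := (((j%:R / N%:R) ^+ 4)%:E : \bar R).

Lemma F_ge0 j : (0 <= F j)%E.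
Proof. by rewrite lee_fin exprn_ge0 // divr_ge0. Qed.

Lemma sum_lin (n J : nat) (e a b : R) (P1 P2 : nat -> nat -> \bar R) :
  0 <= e -> 0 <= a -> 0 <= b -> (forall m j, 0 <= P1 m j)%E -> (forall m j, 0 <= P2 m j)%E ->
  (\sum_(0 <= m < n) \sum_(0 <= j < J) ((e%:E * (a%:E * P1 m j + b%:E * P2 m j)) * F j) =
   e%:E * (a%:E * \sum_(0 <= m < n) \sum_(0 <= j < J) (P1 m j * F j)
         + b%:E * \sum_(0 <= m < n) \sum_(0 <= j < J) (P2 m j * F j)))%E.
Proof.
move=> e0 a0 b0 P10 P20.
have termE : forall m j, ((e%:E * (a%:E * P1 m j + b%:E * P2 m j)) * F j =
    (e * a)%:E * (P1 m j * F j) + (e * b)%:E * (P2 m j * F j))%E.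
  move=> m j.
  rewrite ge0_muleDr ?mule_ge0 ?lee_fin // ge0_muleDl ?mule_ge0 ?lee_fin //.
  by rewrite !EFinM !muleA.
under eq_bigr do under eq_bigr do rewrite termE.
under eq_bigr do rewrite big_split /=.
rewrite big_split /=.
rewrite ge0_muleDr ?mule_ge0 ?lee_fin ?sume_ge0 // => [|m _|m _]; last 2 first.
- by rewrite sume_ge0 // => j _; rewrite mule_ge0 ?F_ge0.
- by rewrite sume_ge0 // => j _; rewrite mule_ge0 ?F_ge0.
rewrite !muleA -!EFinM.
rewrite !ge0_sume_distrr; first last.
- by move=> m _; rewrite sume_ge0 // => j _; rewrite mule_ge0 ?F_ge0.
- by move=> m _; rewrite sume_ge0 // => j _; rewrite mule_ge0 ?F_ge0.
by congr (_ + _); apply: eq_bigr => m _; rewrite ge0_sume_distrr // => j _;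
  rewrite mule_ge0 ?F_ge0.
Qed.



Hypothesis hN : (1 <= N)%N.

Lemma claim n : forall t, 0 <= t -> forall i J,
  (\sum_(0 <= m < n) \sum_(0 <= j < J) (pjumps sigma theta gamma N m t i j * F j)
   <= (expR (15 * (theta + sigma^+2 + gamma) * t) * hh R N i)%:E)%E.
Proof.
set c := 15 * (theta + sigma^+2 + gamma).
have c0 : 0 <= c by rewrite /c mulr_ge0 ?addr_ge0 ?sqr_ge0.
elim: n => [|n IH] t t0 i J.
  by rewrite big_geq // lee_fin mulr_ge0 ?expR_ge0 ?hh_ge0.
rewrite big_nat_recl //=.
set q := exit_rate sigma theta gamma N i.
set a := up_rate sigma theta N i.
set b := down_rate sigma gamma N i.
have S0 : (\sum_(0 <= j < J) ((if i == j then (expR (- (q * t)))%:E else 0) * F j)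
    <= (expR (- (q * t)) * hh R N i)%:E)%E.
  rewrite (eq_bigr (fun j => if i == j then ((expR (- (q * t)))%:E * F j)%E else 0%E));
    last by move=> j _; case: eqP => _; rewrite ?mul0e.
  apply: le_trans (@sum_delta R J i (fun j => ((expR (- (q * t)))%:E * F j)%E) _) _.
    by rewrite mule_ge0 ?lee_fin ?expR_ge0 ?F_ge0.
  rewrite -EFinM lee_fin ler_wpM2l ?expR_ge0 // /hh.
  by rewrite lerDr.
pose G := fun m j (s : R) => ((expR (- (q * s)))%:E *
   (a%:E * pjumps sigma theta gamma N m (t - s) i.+1 j +
    b%:E * pjumps sigma theta gamma N m (t - s) i.-1 j))%E.
have a0 : 0 <= a by exact: up_ge0.
have b0 : 0 <= b by exact: down_ge0.
have q0 : 0 <= q by exact: exit_ge0.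
have G0 : forall m j s, (0 <= G m j s)%E.
  move=> m j s; rewrite /G mule_ge0 ?lee_fin ?expR_ge0 //.
  by rewrite adde_ge0 // mule_ge0 ?lee_fin ?pj_ge0.
have R1 : (\sum_(0 <= m < n) \sum_(0 <= j < J)
     ((\int[lebesgue_measure]_(s in `[0%R, t]%classic) G m j s) * F j) <=
   \int[lebesgue_measure]_(s in `[0%R, t]%classic)
     (\sum_(0 <= m < n) \sum_(0 <= j < J) (G m j s * F j)))%E.
  apply: (@le_trans _ _ (\sum_(0 <= m < n) \int[lebesgue_measure]_(s in `[0%R, t]%classic)
     (\sum_(0 <= j < J) (G m j s * F j)))%E); last first.
    apply: lint_sum => m s _.
    by rewrite sume_ge0 // => j _; rewrite mule_ge0 ?F_ge0.
  apply: lee_sum => m _.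
  apply: (@le_trans _ _ (\sum_(0 <= j < J) \int[lebesgue_measure]_(s in `[0%R, t]%classic)
     (G m j s * F j))%E); last first.
    by apply: lint_sum => j s _; rewrite mule_ge0 ?F_ge0.
  apply: lee_sum => j _.
  rewrite muleC; under [X in (_ <= X)%E]eq_integral do rewrite muleC.
  by apply: lint_scale; [rewrite exprn_ge0 // divr_ge0|move=> s _; exact: G0].
have R2 : (\int[lebesgue_measure]_(s in `[0%R, t]%classic)
     (\sum_(0 <= m < n) \sum_(0 <= j < J) (G m j s * F j)) <=
   \int[lebesgue_measure]_(s in `[0%R, t]%classic)
     ((expR (c * t) * hh R N i) * ((q + c) * expR (- (q + c) * s)))%:E)%E.
  apply: lint_le => s Ds.
    by rewrite sume_ge0 // => m _; rewrite sume_ge0 // => j _; rewrite mule_ge0 ?F_ge0.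
  have ts : 0 <= t - s.
    by move: Ds; rewrite /= in_itv /= => /andP[_]; rewrite subr_ge0.
  rewrite /G (sum_lin n J (expR (- (q * s))) a b
    (fun m j => pjumps sigma theta gamma N m (t - s) i.+1 j)
    (fun m j => pjumps sigma theta gamma N m (t - s) i.-1 j)) ?expR_ge0 //;
    last 2 first.
  - by move=> m j; exact: pj_ge0.
  - by move=> m j; exact: pj_ge0.
  apply: (@le_trans _ _ ((expR (- (q * s)))%:E * (a%:E *
      (expR (c * (t - s)) * hh R N i.+1)%:E + b%:E * (expR (c * (t - s)) * hh R N i.-1)%:E))%E).
    apply: lee_wpmul2l; first by rewrite lee_fin expR_ge0.
    by apply: leeD; apply: lee_wpmul2l; rewrite ?lee_fin //; exact: IH.
  rewrite -!EFinM lee_fin.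
  have eX : expR (- (q * s)) * expR (c * (t - s)) = expR (c * t) * expR (- (q + c) * s).
    by rewrite -!expRD; congr expR; ring.
  rewrite (_ : _ * (_ + _) = (expR (- (q * s)) * expR (c * (t - s))) *
     (a * hh R N i.+1 + b * hh R N i.-1)); last by ring.
  rewrite eX (_ : _ * (_ * _) = (expR (c * t) * expR (- (q + c) * s)) *
     ((q + c) * hh R N i)); last by ring.
  apply: ler_wpM2l; first by rewrite mulr_ge0 ?expR_ge0.
  exact: lyap.
rewrite (@int_exp R (q + c) t (expR (c * t) * hh R N i) (addr_ge0 q0 c0) t0) in R2; last by rewrite mulr_ge0 ?expR_ge0 ?hh_ge0.
apply: le_trans (leeD S0 (le_trans R1 R2)) _.
rewrite -EFinD lee_fin.
have E : expR (- (q * t)) = expR (c * t) * expR (- (q + c) * t).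
  by rewrite -expRD; congr expR; ring.
by rewrite E le_eqVlt; apply/orP; left; apply/eqP; ring.
Qed.


End main.

Lemma series_le (R : realType) (u : nat -> \bar R) (M : \bar R) :
  (forall n, 0 <= u n)%E -> (forall K, \sum_(0 <= k < K) u k <= M)%E ->
  (\sum_(k <oo) u k <= M)%E.
Proof.
move=> u0 uM; apply: lime_le; first exact: is_cvg_nneseries.
by apply: nearW => K; exact: uM.
Qed.

Theorem lemma5 (R : realType) (sigma theta gamma x : R)
  (hsigma : 0 < sigma) (htheta : 0 <= theta) (hgamma : 0 <= gamma)
  (hx : 0 < x) (T : R) (hT : 0 < T) :
  exists M : R, forall N : nat, (1 <= N)%N -> forall t : R, 0 <= t -> t <= T ->
    (fourth_moment sigma theta gamma N (start_index N x) t <= M%:E)%E.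
Proof.
set c := 15 * (theta + sigma^+2 + gamma).
have c0 : 0 <= c by rewrite /c mulr_ge0 ?addr_ge0 ?sqr_ge0.
exists (expR (c * T) * (1 + x ^+ 4)) => N N1 t t0 tT.
set k0 := start_index N x.
apply: (@le_trans _ _ (expR (c * t) * hh R N k0)%:E).
  rewrite /fourth_moment /trans_prob.
  apply: series_le => [j|J].
    rewrite mule_ge0 ?F_ge0 //; apply: nneseries_ge0 => n _ _; exact: pj_ge0.
  apply: (@le_trans _ _ (\sum_(0 <= n <oo) \sum_(0 <= j < J)
      (pjumps sigma theta gamma N n t k0 j * ((j%:R / N%:R) ^+ 4)%:E))%E).
    rewrite nneseries_sum_nat; last by move=> i j; rewrite mule_ge0 ?F_ge0 ?pj_ge0.
    apply: lee_sum => j _.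
    rewrite muleC -nneseriesZl; last by move=> n _; exact: pj_ge0.
    apply: lee_nneseries => [n _ _|n _]; first by rewrite mule_ge0 ?F_ge0 ?pj_ge0.
    by rewrite muleC.
  apply: series_le => [n|K]; first by rewrite sume_ge0 // => j _; rewrite mule_ge0 ?F_ge0 ?pj_ge0.
  exact: claim.
rewrite lee_fin; apply: ler_pM; rewrite ?expR_ge0 ?hh_ge0 //.
  by rewrite ler_expR ler_wpM2l.
rewrite /hh lerD2l; apply: lerXn2r.
- by rewrite nnegrE divr_ge0.
- by rewrite nnegrE ltW.
rewrite ler_pdivrMr ?ltr0n // mulrC /k0 /start_index.
by rewrite truncn_le mulr_ge0 ?ler0n ?ltW.
Qed.
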